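(* Let $\sigma : \mathcal{S} \to !A^\perp \parallel !B$ be a negative deterministic sequential innocent $\sim$-strategy, and let $s, s' \in S$ be such that $|[s]| = |[s']|$. Then the following are equivalent: (1) $\mathcal{P}(s) = \mathcal{P}(s')$; (2) the unique order-isomorphism $\theta : [s] \cong [s']$ is in the isomorphism family of $\mathcal{S}$; (3) the unique order-isomorphism $\theta : [s] \cong [s']$ is such that $\sigma\,\theta$ is in the isomorphism family of $!A^\perp \parallel !B$.
   Context: $e \rightarrow e'$ denotes immediate causal dependency ($e<e'$ with nothing strictly between). $A,B$ are negative arenas (countable forest-shaped, conflict-free, alternating esps with negative minimal events), and $!A$ is the tcg of index functions $\alpha:[a]\to\omega$ whose symmetry consists of the label-preserving order-isomorphisms between configurations; $\mathrm{lbl}\,\alpha=a$. A $\sim$-strategy is a map of essps which is courteous (if $s_1 \rightarrow s_2$ with $\mathrm{pol}(s_1)=+$ or $\mathrm{pol}(s_2)=-$ then $\sigma s_1 \rightarrow \sigma s_2$), strong-receptive and thin; negative means minimal events of $S$ are negative. Sequential innocent: backward sequential ($[s]$ totally ordered) and forward sequential (if $s \rightarrow s_1$, $s \rightarrow s_2$ with $s_1,s_2$ positive, then $[s_1]\cup[s_2]$ is not a configuration). Deterministic: every finite subset of $S$ is consistent. For $s\in S$ with $[s]$ the chain $s_0 \rightarrow s_1 \rightarrow\dots\rightarrow s_n=s$, $\mathcal{P}(s)$ is the pointing sequence $(\mathrm{lbl}(\sigma s_0),\dots,\mathrm{lbl}(\sigma s_n))$ in which $\mathrm{lbl}(\sigma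 s_i)$ points to $\mathrm{lbl}(\sigma s_j)$ if $\sigma s_j \rightarrow \sigma s_i$, or if $j=0$ and $\sigma s_i$ is minimal in $!A$. *)

(* Defs.v *)
From Stdlib Require Import List Arith.
Import ListNotations.
Set Implicit Arguments.

(** * Event structures with polarity (esp) *)

Inductive pol := Pos | Neg.

Definition flip (p : pol) : pol := match p with Pos => Neg | Neg => Pos end.

(** Data of an event structure with polarity: events, causal order,
    consistency (on finite sets, represented by lists), polarity. *)
Record esp := Esp {
  ev  : Type;
  le  : ev -> ev -> Prop;
  con : list ev -> Prop;
  pl  : ev -> pol
}.

Definition lt (E : esp) (a b : ev E) : Prop := le E a b /\ a <> b.

Definition imm (E : esp) (a b : ev E) : Prop :=
  lt E a b /\ ~ (exists c, lt E a c /\ lt E c b).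

Definition minimal (E : esp) (a : ev E) : Prop :=
  forall b, le E b a -> b = a.

Definition is_es (E : esp) : Prop :=
  (forall a, le E a a) /\
  (forall a b c, le E a b -> le E b c -> le E a c) /\
  (forall a b, le E a b -> le E b a -> a = b) /\
  (forall a, exists l, forall b, In b l <-> le E b a) /\
  (forall a, con E [a]) /\
  (forall X Y, con E X -> incl Y X -> con E Y) /\
  (forall X a b, con E X -> In b X -> le E a b -> con E (a :: X)).

Definition finite_set (X : Type) (x : X -> Prop) : Prop :=
  exists l, forall e, x e <-> In e l.

Definition config (E : esp) (x : ev E -> Prop) : Prop :=
  finite_set x /\
  (forall a b, x b -> le E a b -> x a) /\
  (forall l, (forall e, In e l -> x e) -> con E l).

(** the prime configuration [a] *)
Definition cause (E : esp) (a : ev E) : ev E -> Prop := fun b => le E b a.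

Definition set_bij (X Y : Type) (th : X -> Y -> Prop) (x : X -> Prop) (y : Y -> Prop)
  : Prop :=
  (forall a b, th a b -> x a /\ y b) /\
  (forall a, x a -> exists b, th a b) /\
  (forall b, y b -> exists a, th a b) /\
  (forall a b b', th a b -> th a b' -> b = b') /\
  (forall a a' b, th a b -> th a' b -> a = a').

Definition bij (E : esp) (th : ev E -> ev E -> Prop) (x y : ev E -> Prop) : Prop :=
  config E x /\ config E y /\ set_bij th x y.

Definition order_iso (E : esp) (th : ev E -> ev E -> Prop) (x y : ev E -> Prop)
  : Prop :=
  set_bij th x y /\
  (forall a a' b b', th a b -> th a' b' -> (le E a a' <-> le E b b')).

Definition rel_id (X : Type) (x : X -> Prop) : X -> X -> Prop :=
  fun a b => x a /\ a = b.

Definition rel_inv (X : Type) (th : X -> X -> Prop) : X -> X -> Prop :=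
  fun a b => th b a.

Definition rel_comp (X : Type) (th ph : X -> X -> Prop) : X -> X -> Prop :=
  fun a c => exists b, th a b /\ ph b c.

Definition rel_incl (X Y : Type) (th ph : X -> Y -> Prop) : Prop :=
  forall a b, th a b -> ph a b.

Definition rel_eq (X Y : Type) (th ph : X -> Y -> Prop) : Prop :=
  forall a b, th a b <-> ph a b.

Definition img (X Y : Type) (f : X -> Y) (th : X -> X -> Prop) : Y -> Y -> Prop :=
  fun c d => exists a b, th a b /\ f a = c /\ f b = d.

Definition dom (X Y : Type) (th : X -> Y -> Prop) : X -> Prop :=
  fun a => exists b, th a b.

(** * Event structures with symmetry and polarity (essp) *)

Record essp := Essp {
  esp_of : esp;
  iso : (ev esp_of -> ev esp_of -> Prop) -> Prop
}.

Definition sev (S : essp) := ev (esp_of S).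

Definition is_iso_family (E : esp) (I : (ev E -> ev E -> Prop) -> Prop) : Prop :=
  (forall th, I th -> exists x y, bij E th x y) /\
  (forall x, config E x -> I (rel_id x)) /\
  (forall th, I th -> I (rel_inv th)) /\
  (forall th ph, I th -> I ph -> I (rel_comp th ph)) /\
  (forall th x y x', I th -> bij E th x y -> config E x' ->
     (forall a, x' a -> x a) -> I (fun a b => th a b /\ x' a)) /\
  (forall th x y x', I th -> bij E th x y -> config E x' ->
     (forall a, x a -> x' a) ->
     exists th', I th' /\ rel_incl th th' /\ (forall a, dom th' a <-> x' a)).

Definition is_essp (S : essp) : Prop :=
  is_es (esp_of S) /\ @is_iso_family (esp_of S) (iso S) /\
  (forall th a b, iso S th -> th a b -> pl _ a = pl _ b).

(** * Arenas and the game !A^perp || !B *)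

Definition is_arena (A : esp) : Prop :=
  is_es A /\
  (exists f : ev A -> nat, forall a b, f a = f b -> a = b) /\
  (forall a1 a2 a, le A a1 a -> le A a2 a -> le A a1 a2 \/ le A a2 a1) /\
  (forall X, con A X) /\
  (forall a b, imm A a b -> pl A a <> pl A b) /\
  (forall a, minimal A a -> pl A a = Neg).

(** events of !A : index functions alpha : [a] -> omega *)
Definition bang_ev (A : esp) : Type :=
  { a : ev A & forall a' : ev A, le A a' a -> nat }.

Definition lbl (A : esp) (al : bang_ev A) : ev A := projT1 al.

(** inclusion of index functions (as graphs) *)
Definition bang_le (A : esp) (al be : bang_ev A) : Prop :=
  le A (lbl al) (lbl be) /\
  (forall a' (h1 : le A a' (lbl al)) (h2 : le A a' (lbl be)),
      projT2 al a' h1 = projT2 be a' h2).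

Definition bang_esp (A : esp) : esp :=
  Esp (@bang_le A) (fun X => con A (map (@lbl A) X)) (fun al => pl A (lbl al)).

Definition bang (A : esp) : essp :=
  Essp (bang_esp A)
    (fun th => exists x y, bij (bang_esp A) th x y /\
       (forall al be, th al be -> lbl al = lbl be) /\
       (forall al al' be be', th al be -> th al' be' ->
          (bang_le al al' <-> bang_le be be'))).

Definition dual (G : essp) : essp :=
  Essp (Esp (le (esp_of G)) (con (esp_of G)) (fun a => flip (pl _ a))) (iso G).

Definition par_le (G H : esp) (a b : ev G + ev H) : Prop :=
  match a, b with
  | inl a, inl b => le G a b
  | inr a, inr b => le H a b
  | _, _ => False
  end.

Definition lefts (X Y : Type) (l : list (X + Y)) : list X :=
  flat_map (fun e => match e with inl a => [a] | inr _ => [] end) l.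
Definition rights (X Y : Type) (l : list (X + Y)) : list Y :=
  flat_map (fun e => match e with inl _ => [] | inr b => [b] end) l.

Definition par_esp (G H : esp) : esp :=
  Esp (@par_le G H)
      (fun X => con G (lefts X) /\ con H (rights X))
      (fun e => match e with inl a => pl G a | inr b => pl H b end).

Definition par (G H : essp) : essp :=
  Essp (par_esp (esp_of G) (esp_of H))
    (fun th =>
       (forall a b, th a b ->
          match a, b with inl _, inl _ => True | inr _, inr _ => True | _, _ => False end) /\
       iso G (fun a b => th (inl a) (inl b)) /\
       iso H (fun a b => th (inr a) (inr b))).

Definition game (A B : esp) : essp := par (dual (bang A)) (bang B).

Definition game_lbl (A B : esp) (e : sev (game A B)) : ev A + ev B :=
  match e with inl al => inl (lbl al) | inr be => inr (lbl be) end.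

(** * Strategies *)

Definition essp_map (S G : essp) (f : sev S -> sev G) : Prop :=
  (forall x, config _ x -> config _ (fun c => exists a, x a /\ f a = c)) /\
  (forall x a b, config _ x -> x a -> x b -> f a = f b -> a = b) /\
  (forall a, pl _ (f a) = pl _ a) /\
  (forall th, iso S th -> iso G (img f th)).

Definition courteous (S G : essp) (f : sev S -> sev G) : Prop :=
  forall s1 s2, imm _ s1 s2 -> pl _ s1 = Pos \/ pl _ s2 = Neg ->
    imm _ (f s1) (f s2).

Definition ext_pol (E : esp) (p : pol) (th ph : ev E -> ev E -> Prop) : Prop :=
  rel_incl th ph /\ (forall a b, ph a b -> ~ th a b -> pl E a = p).

Definition strong_receptive (S G : essp) (f : sev S -> sev G) : Prop :=
  forall th ps, iso S th -> iso G ps -> ext_pol _ Neg (img f th) ps ->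
    (exists th', iso S th' /\ rel_incl th th' /\ rel_eq (img f th') ps) /\
    (forall th' th'', iso S th' -> rel_incl th th' -> rel_eq (img f th') ps ->
                      iso S th'' -> rel_incl th th'' -> rel_eq (img f th'') ps ->
                      rel_eq th' th'').

Definition thin (S : essp) : Prop :=
  forall x th, config _ x -> iso S th -> ext_pol _ Pos (rel_id x) th ->
    forall a b, th a b -> a = b.

Definition strategy (S G : essp) (f : sev S -> sev G) : Prop :=
  @essp_map S G f /\ @courteous S G f /\ @strong_receptive S G f /\ thin S.

Definition negative (S : essp) : Prop :=
  forall s : sev S, minimal _ s -> pl _ s = Neg.

Definition deterministic (S : essp) : Prop :=
  forall X : list (sev S), con _ X.

Definition backward_sequential (S : essp) : Prop :=
  forall s s1 s2 : sev S, le _ s1 s -> le _ s2 s -> le _ s1 s2 \/ le _ s2 s1.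

Definition forward_sequential (S : essp) : Prop :=
  forall s s1 s2 : sev S, imm _ s s1 -> imm _ s s2 -> pl _ s1 = Pos -> pl _ s2 = Pos ->
    s1 <> s2 -> ~ config _ (fun e => le _ e s1 \/ le _ e s2).

Definition sequential_innocent (S : essp) : Prop :=
  backward_sequential S /\ forward_sequential S.

Definition cause_card (S : essp) (s : sev S) (n : nat) : Prop :=
  exists l, NoDup l /\ length l = n /\ forall e, In e l <-> le _ e s.

Definition chain (S : essp) (s : sev S) (n : nat) (c : nat -> sev S) : Prop :=
  c n = s /\ (forall i, i < n -> imm _ (c i) (c (Datatypes.S i))) /\
  (forall e, le _ e s <-> exists i, i <= n /\ c i = e).

(** pointer from position i to position j *)
Definition points (A B : esp) (S : essp) (f : sev S -> sev (game A B))
  (c : nat -> sev S) (i j : nat) : Prop :=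
  imm _ (f (c j)) (f (c i)) \/
  (j = 0 /\ exists al, f (c i) = inl al /\ minimal (esp_of (dual (bang A))) al).

(** pointing sequences: a list of labels together with a pointer relation *)
Definition pseq (A B : esp) : Type := (list (ev A + ev B) * (nat -> nat -> Prop))%type.

Definition pointing_seq (A B : esp) (S : essp) (f : sev S -> sev (game A B))
  (s : sev S) (p : pseq A B) : Prop :=
  exists n c, @chain S s n c /\
    fst p = map (fun i => game_lbl (f (c i))) (seq 0 (Datatypes.S n)) /\
    (forall i j, snd p i j <-> (i <= n /\ j <= n /\ @points A B S f c i j)).

(* Main.v *)
Require Import Defs.
From Stdlib Require Import List Arith Lia Classical FunctionalExtensionality PropExtensionality ProofIrrelevance.
Import ListNotations.

Inductive rt (P : nat -> nat -> Prop) : nat -> nat -> Prop :=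
| rt_refl j : rt P j j
| rt_step j m i : rt P j m -> P m i -> rt P j i.

Lemma nat_max (P : nat -> Prop) i j : P j -> j <= i ->
  exists m, P m /\ m <= i /\ forall q, P q -> q <= i -> q <= m.
Proof.
  induction i as [|i IH]; intros Hj Hji.
  - exists 0. assert (j = 0) as -> by lia. repeat split; auto; intros; lia.
  - destruct (classic (P (S i))) as [h|h].
    + exists (S i). repeat split; auto.
    + assert (j <= i) as Hji'. { destruct (Nat.eq_dec j (S i)); [subst; contradiction|lia]. }
      destruct (IH Hj Hji') as [m [Pm [Hm Hmax]]]. exists m. split; auto. split; [lia|].
      intros q Pq Hq. destruct (Nat.eq_dec q (S i)); [subst; contradiction|]. apply Hmax; auto; lia.
Qed.

Lemma rt_mono (P Q : nat -> nat -> Prop) : (forall a b, P a b -> Q a b) ->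
  forall a b, rt P a b -> rt Q a b.
Proof. intros H a b h; induction h; [constructor|econstructor; eauto]. Qed.

Section Main.
Variables (A B : esp) (S : essp) (sigma : sev S -> sev (game A B)).
Hypothesis HA : is_arena A.
Hypothesis HB : is_arena B.
Hypothesis HS : is_essp S.
Hypothesis Hstr : strategy S (game A B) sigma.
Hypothesis Hneg : negative S.
Hypothesis Hdet : deterministic S.
Hypothesis Hseq : sequential_innocent S.

Notation E := (esp_of S).
Notation G := (esp_of (game A B)).

Lemma leS_refl a : le E a a.
Proof. destruct HS as [[h _] _]. apply h. Qed.
Lemma leS_trans a b c : le E a b -> le E b c -> le E a c.
Proof. destruct HS as [[_ [h _]] _]. apply h. Qed.
Lemma leS_anti a b : le E a b -> le E b a -> a = b.
Proof. destruct HS as [[_ [_ [h _]]] _]. apply h. Qed.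
Lemma causeS_fin a : exists l, forall b, In b l <-> le E b a.
Proof. destruct HS as [[_ [_ [_ [h _]]]] _]. apply h. Qed.
Lemma config_S (x : sev S -> Prop) : finite_set x ->
  (forall a b, x b -> le E a b -> x a) -> config E x.
Proof. intros h1 h2. split; [exact h1|split; [exact h2|]]. intros; apply Hdet. Qed.

Lemma es_refl (X : esp) : is_es X -> forall a, le X a a.
Proof. intros [h _]; exact h. Qed.
Lemma es_trans (X : esp) : is_es X -> forall a b c, le X a b -> le X b c -> le X a c.
Proof. intros [_ [h _]]; exact h. Qed.

Lemma bang_le_refl (X : esp) : is_es X -> forall al : bang_ev X, bang_le al al.
Proof. intros H al. split. apply es_refl; auto. intros; f_equal; apply proof_irrelevance. Qed.
Lemma bang_le_trans (X : esp) : is_es X -> forall a b c : bang_ev X,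
  bang_le a b -> bang_le b c -> bang_le a c.
Proof. intros H a b c [h1 e1] [h2 e2]. split. eapply es_trans; eauto.
  intros a' p1 p3. rewrite (e1 a' p1 (es_trans _ H _ _ _ p1 h1)). apply e2. Qed.

Lemma leG_refl (e : sev (game A B)) : le G e e.
Proof. destruct e; simpl; apply bang_le_refl; [apply HA | apply HB]. Qed.
Lemma leG_trans (a b c : sev (game A B)) : le G a b -> le G b c -> le G a c.
Proof. destruct a, b, c; simpl; try tauto; apply bang_le_trans; [apply HA|apply HB]. Qed.


Lemma chain_mono {s n c} : @chain S s n c -> forall i j, i <= j -> j <= n -> le E (c i) (c j).
Proof.
  intros [_ [Himm _]] i j Hij. induction Hij; intros Hn.
  - apply leS_refl.
  - eapply leS_trans. apply IHHij; lia. destruct (Himm m ltac:(lia)) as [[h _] _]; exact h.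
Qed.

Lemma chain_neq {s n c} : @chain S s n c -> forall i j, i < j -> j <= n -> c i <> c j.
Proof.
  intros Hc i j Hij Hn Heq. destruct j as [|j]; [lia|].
  pose proof (chain_mono Hc i j ltac:(lia) ltac:(lia)) as h.
  destruct Hc as [_ [Himm _]]. destruct (Himm j ltac:(lia)) as [[h1 h2] _].
  rewrite Heq in h. apply h2. apply leS_anti; auto.
Qed.

Lemma chain_inj {s n c} : @chain S s n c -> forall i j, i <= n -> j <= n -> c i = c j -> i = j.
Proof.
  intros Hc i j Hi Hj Heq. destruct (lt_eq_lt_dec i j) as [[h|h]|h]; auto.
  - exfalso; eapply chain_neq; eauto.
  - exfalso; eapply chain_neq; eauto.
Qed.

Lemma chain_le_iff {s n c} : @chain S s n c -> forall i j, i <= n -> j <= n ->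
  (le E (c i) (c j) <-> i <= j).
Proof.
  intros Hc i j Hi Hj. split; [|intro; eapply chain_mono; eauto].
  intro h. destruct (le_lt_dec i j) as [h'|h']; auto. exfalso.
  pose proof (chain_mono Hc j i ltac:(lia) Hi). apply (chain_neq Hc j i h' Hi).
  apply leS_anti; auto.
Qed.

Lemma chain_top {s n c} : @chain S s n c -> forall i, i <= n -> le E (c i) s.
Proof. intros Hc i Hi. destruct Hc as [h [_ H]]. apply H. eauto. Qed.

Lemma chain_cause {s n c} : @chain S s n c -> forall k e, k <= n ->
  (le E e (c k) <-> exists j, j <= k /\ c j = e).
Proof.
  intros Hc k e Hk. split.
  - intro h. assert (le E e s) as hs by (eapply leS_trans; [exact h|apply (chain_top Hc k Hk)]).
    destruct Hc as [a [b H]]. apply H in hs. destruct hs as [j [Hj Hje]]. subst e.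
    exists j. split; auto. eapply (chain_le_iff (s:=s) (conj a (conj b H))); eauto.
  - intros [j [Hj <-]]. eapply chain_mono; eauto.
Qed.

Lemma list_max (l : list (sev S)) : l <> [] ->
  (forall x y, In x l -> In y l -> le E x y \/ le E y x) ->
  exists m, In m l /\ forall e, In e l -> le E e m.
Proof.
  induction l as [|a l IH]; intros Hne Htot; [congruence|].
  destruct l as [|b l'].
  - exists a; split; [now left|]. intros e [<-|[]]. apply leS_refl.
  - destruct IH as [m [Hm Hmax]]; [congruence| intros; apply Htot; right; auto |].
    destruct (Htot a m (or_introl eq_refl) (or_intror Hm)) as [h|h].
    + exists m; split; [right; auto|]. intros e [<-|He]; auto.
    + exists a; split; [left; auto|]. intros e [<-|He]. apply leS_refl.
      eapply leS_trans; eauto.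
Qed.

Lemma list_remove {T : Type} {l : list T} {x} : NoDup l -> In x l ->
  exists l', NoDup l' /\ length l' = length l - 1 /\ forall e, In e l' <-> In e l /\ e <> x.
Proof.
  induction l as [|a l IH]; intros Hnd Hin; [destruct Hin|].
  inversion Hnd; subst. destruct (classic (a = x)) as [->|Hax].
  - exists l. split; auto. split; [simpl; lia|]. intros e; split.
    + intro h; split; [right; auto| intros ->; auto].
    + intros [[<-|h] h']; [congruence|auto].
  - destruct Hin as [->|Hin]; [congruence|].
    destruct (IH H2 Hin) as [l' [N [L I]]]. exists (a :: l'). split.
    + constructor; auto. intro h; apply I in h; tauto.
    + split. simpl. destruct l; [destruct Hin|]. simpl in *; lia.
      intro e. simpl. rewrite I. split.
      * intros [<-|[h1 h2]]; split; auto.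
      * intros [[<-|h1] h2]; auto.
Qed.

Lemma chain_exists : forall n s, @cause_card S s (Datatypes.S n) -> exists c, @chain S s n c.
Proof.
  induction n as [|n IH]; intros s [l [Hnd [Hlen Hl]]].
  - exists (fun _ => s). destruct l as [|x [|y l]]; simpl in Hlen; try lia.
    assert (x = s) as <-. { assert (In s [x]) by (apply Hl, leS_refl). destruct H as [->|[]]; auto. }
    split; [auto|split; [intros; lia|]]. intro e. rewrite <- Hl. simpl. split.
    + intros [->|[]]. exists 0; auto.
    + intros [i [_ ->]]; auto.
  - assert (In s l) as Hs by (apply Hl, leS_refl).
    destruct (list_remove Hnd Hs) as [l' [N' [L' I']]].
    destruct (list_max l') as [m [Hm Hmax]].
    + intros ->. simpl in L'. lia.
    + intros x y Hx Hy. apply I' in Hx; apply I' in Hy. destruct Hx as [Hx _]; destruct Hy as [Hy _]. apply Hl in Hx; apply Hl in Hy.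
      destruct Hseq as [bs _]. eapply bs; eauto.
    + assert (Hms : le E m s /\ m <> s) by (apply I' in Hm; destruct Hm as [h1 h2]; apply Hl in h1; auto).
      assert (Hcm : forall e, In e l' <-> le E e m).
      { intro e. split; [intro h; apply Hmax; auto|]. intro h. apply I'. split.
        - apply Hl. eapply leS_trans; eauto. apply Hms.
        - intros ->. apply (proj2 Hms). apply leS_anti; auto. apply Hms. }
      destruct (IH m) as [c' Hc']. { exists l'. split; auto. split; auto. lia. }
      exists (fun i => if Nat.eqb i (Datatypes.S n) then s else c' i).
      split; [rewrite Nat.eqb_refl; auto|split].
      * intros i Hi. destruct (Nat.eqb_spec i (Datatypes.S n)); [lia|].
        destruct (Nat.eqb_spec (Datatypes.S i) (Datatypes.S n)).
        -- assert (i = n) as -> by lia. destruct Hc' as [-> _].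
           split; [split; apply Hms|]. intros [w [[h1 h2] [h3 h4]]].
           assert (In w l') by (apply I'; split; [apply Hl; auto|auto]).
           apply Hcm in H. apply h2. apply leS_anti; auto.
        -- destruct Hc' as [_ [Himm _]]. apply Himm; lia.
      * intro e. split.
        -- intro h. destruct (classic (e = s)) as [->|Hne].
           ++ exists (Datatypes.S n). rewrite Nat.eqb_refl; auto.
           ++ assert (In e l') by (apply I'; split; [apply Hl; auto|auto]).
              apply Hcm in H. destruct Hc' as [_ [_ Hcc]]. apply Hcc in H.
              destruct H as [i [Hi <-]]. exists i. destruct (Nat.eqb_spec i (Datatypes.S n)); [lia|]. auto.
        -- intros [i [Hi <-]]. destruct (Nat.eqb_spec i (Datatypes.S n)); [apply leS_refl|].
           eapply leS_trans; [|apply Hms]. eapply chain_top; eauto. lia.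
Qed.

Lemma card_pos {s n} : @cause_card S s n -> exists m, n = Datatypes.S m.
Proof. intros [l [_ [Hl H]]]. destruct l; simpl in Hl. exfalso; apply (proj2 (H s)), leS_refl. eauto. Qed.


Lemma Hmap : @essp_map S (game A B) sigma.
Proof. apply Hstr. Qed.

Lemma config_cause e : config E (cause E e).
Proof. apply config_S. destruct (causeS_fin e) as [l Hl]. exists l. intro b. rewrite Hl. reflexivity.
  intros a b h1 h2. unfold cause in *. eapply leS_trans; eauto. Qed.

Lemma F1 {s n c} : @chain S s n c -> forall i d, i <= n -> le G d (sigma (c i)) ->
  exists j, j <= i /\ sigma (c j) = d.
Proof.
  intros Hc i d Hi Hd. destruct Hmap as [Hcf _]. destruct (Hcf _ (config_cause (c i))) as [_ [Hdc _]].
  destruct (Hdc d (sigma (c i))) as [a [Ha <-]]. exists (c i); split; auto. apply leS_refl. auto.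
  apply (chain_cause Hc i a Hi) in Ha. destruct Ha as [j [Hj <-]]. eauto.
Qed.

Lemma loc_inj {x a b} : config E x -> x a -> x b -> sigma a = sigma b -> a = b.
Proof. destruct Hmap as [_ [h _]]. apply h. Qed.

Lemma F2 {s n c} : @chain S s n c -> forall i j, i <= n -> j <= n -> sigma (c i) = sigma (c j) -> i = j.
Proof.
  intros Hc i j Hi Hj Heq. eapply (chain_inj Hc); eauto. apply (loc_inj (config_cause s)); auto;
  unfold cause; eapply chain_top; eauto.
Qed.

Definition Pc (c : nat -> sev S) (n m i : nat) : Prop :=
  m <= n /\ i <= n /\ imm G (sigma (c m)) (sigma (c i)).

Lemma Char {s n c} : @chain S s n c -> forall i j, i <= n -> j <= n ->
  (le G (sigma (c j)) (sigma (c i)) <-> rt (Pc c n) j i).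
Proof.
  intros Hc i j Hi Hj. split.
  - revert j Hj. induction i as [i IH] using lt_wf_ind. intros j Hj Hle.
    destruct (classic (sigma (c j) = sigma (c i))) as [He|Hne].
    + rewrite (F2 Hc j i Hj Hi He). constructor.
    + assert (Hji : j <= i).
      { destruct (F1 Hc i _ Hi Hle) as [j' [Hj' He']]. rewrite <- (F2 Hc j' j ltac:(lia) Hj He'). auto. }
      set (P := fun m => le G (sigma (c j)) (sigma (c m)) /\ le G (sigma (c m)) (sigma (c i)) /\ sigma (c m) <> sigma (c i)).
      destruct (nat_max P i j) as [m [[Pm1 [Pm2 Pm3]] [Hmi Hmax]]]; [split; [apply leG_refl|auto]|auto|].
      assert (m <> i) by (intros ->; auto).
      apply rt_step with m. apply IH; auto; lia.
      split; [lia|split; auto]. split; [split; auto|].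
      intros [w [[w1 w2] [w3 w4]]].
      destruct (F1 Hc i w Hi w3) as [q [Hq <-]].
      destruct (F1 Hc q (sigma (c m)) ltac:(lia) w1) as [q' [Hq' Hqe]].
      apply (F2 Hc q' m ltac:(lia) ltac:(lia)) in Hqe. subst q'.
      assert (q <= m). { apply Hmax; auto. split; [eapply leG_trans; eauto|split; auto]. }
      apply w2. f_equal. f_equal. lia.
  - intro h. induction h. apply leG_refl. destruct H as [Hm [_ [[h1 _] _]]]. eapply leG_trans; [apply IHh; auto|exact h1].
Qed.

Section Side.
Variables (X : esp) (HX : is_arena X) (inj : bang_ev X -> sev (game A B)).
Hypothesis P1 : forall a b, le G (inj a) (inj b) <-> bang_le a b.
Hypothesis P2 : forall d b, le G d (inj b) -> exists a, d = inj a.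
Hypothesis P3 : forall a d, game_lbl (inj a) = game_lbl d -> exists b, d = inj b.
Hypothesis P4 : forall a b, game_lbl (inj a) = game_lbl (inj b) -> lbl a = lbl b.
Hypothesis P5 : forall a b, inj a = inj b -> a = b.

Lemma fin_one (d : sev (game A B)) : exists l, forall al, d = inj al <-> In al l.
Proof.
  destruct (classic (exists al, d = inj al)) as [[al0 ->]|h].
  - exists [al0]. intro al. simpl. split; [intro h; left; symmetry; apply P5; auto|intros [->|[]]; auto].
  - exists []. intro al. simpl. split; [intros ->; apply h; eauto|intros []].
Qed.

Lemma side_config {s0 n cc} : @chain S s0 n cc -> forall k, k <= n ->
  config (bang_esp X) (fun al => exists j, j <= k /\ sigma (cc j) = inj al).
Proof.
  intros Hcc k Hk. split; [|split].
  - clear Hk. induction k as [|k IH].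
    + destruct (fin_one (sigma (cc 0))) as [l Hl]. exists l. intro al. rewrite <- Hl.
      split; [intros [j [Hj ?]]; assert (j = 0) as -> by lia; auto|intros; exists 0; auto].
    + destruct IH as [l1 H1]. destruct (fin_one (sigma (cc (Datatypes.S k)))) as [l2 H2].
      exists (l1 ++ l2). intro al. rewrite in_app_iff, <- H1, <- H2. split.
      * intros [j [Hj He]]. destruct (Nat.eq_dec j (Datatypes.S k)) as [->|hne]; [right; auto|left; exists j; split; auto; lia].
      * intros [[j [Hj He]]|He]; [exists j; split; auto|exists (Datatypes.S k); auto].
  - intros a b [j [Hj Hb]] Hab. apply P1 in Hab. rewrite <- Hb in Hab.
    destruct (F1 Hcc j _ ltac:(lia) Hab) as [q [Hq He]]. exists q; split; auto; lia.
  - intros l _. simpl. destruct HX as [_ [_ [_ [h _]]]]. apply h.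
Qed.

End Side.

Lemma imm_char {s0 n cc} : @chain S s0 n cc -> forall m i, m <= n -> i <= n ->
  (imm G (sigma (cc m)) (sigma (cc i)) <->
   (le G (sigma (cc m)) (sigma (cc i)) /\ m <> i /\
    ~ exists q, q <= n /\ le G (sigma (cc m)) (sigma (cc q)) /\ m <> q /\
                le G (sigma (cc q)) (sigma (cc i)) /\ q <> i)).
Proof.
  intros Hcc m i Hm Hi. split.
  - intros [[h1 h2] h3]. split; auto. split; [intros ->; auto|].
    intros [q [Hq [q1 [q2 [q3 q4]]]]]. apply h3. exists (sigma (cc q)).
    split; split; auto; intro e; [apply q2|apply q4]; eapply F2; eauto.
  - intros [h1 [h2 h3]]. split; [split; auto; intro e; apply h2; eapply F2; eauto|].
    intros [w [[w1 w2] [w3 w4]]]. destruct (F1 Hcc i w Hi w3) as [q [Hq <-]].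
    apply h3. exists q. repeat split; auto; try lia; intros ->; auto.
Qed.

Lemma min_char {s0 n cc} : @chain S s0 n cc -> forall i al, i <= n -> sigma (cc i) = inl al ->
  (minimal (esp_of (dual (bang A))) al <-> forall q, q <= n -> le G (sigma (cc q)) (sigma (cc i)) -> q = i).
Proof.
  intros Hcc i al Hi He. split.
  - intros Hmin q Hq Hle. rewrite He in Hle. destruct (sigma (cc q)) as [b|b] eqn:Eq; simpl in Hle; [|destruct Hle].
    apply Hmin in Hle. subst b. eapply F2; eauto. congruence.
  - intros H b Hb. assert (le G (inl b) (sigma (cc i))) as h by (rewrite He; exact Hb).
    destruct (F1 Hcc i _ Hi h) as [q [Hq Hqe]]. assert (q = i) by (apply H; [lia|rewrite Hqe; auto]).
    subst q. congruence.
Qed.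

Lemma fam : @is_iso_family E (iso S).
Proof. apply HS. Qed.

Lemma iso_ext (t t' : sev S -> sev S -> Prop) : iso S t -> rel_eq t t' -> iso S t'.
Proof.
  intros h e. replace t' with t; auto. apply functional_extensionality; intro a.
  apply functional_extensionality; intro b. apply propositional_extensionality. apply e.
Qed.

Lemma config_union {x y : sev S -> Prop} : config E x -> config E y -> config E (fun e => x e \/ y e).
Proof.
  intros [[l1 F1'] [D1 _]] [[l2 F2'] [D2 _]]. apply config_S.
  - exists (l1 ++ l2). intro e. rewrite in_app_iff, <- F1', <- F2'. tauto.
  - intros a b [h|h] hl; [left; eapply D1|right; eapply D2]; eauto.
Qed.

Lemma iso_empty (s0 : sev S) : iso S (fun _ _ => False).
Proof.
  destruct fam as [_ [Hid [_ [_ [Hres _]]]]].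
  assert (CE : config E (fun _ => False)).
  { apply config_S. exists []. intro; simpl; tauto. intros; auto. }
  refine (iso_ext _ _ (Hres (rel_id (cause E s0)) (cause E s0) (cause E s0) (fun _ => False)
    (Hid _ (config_cause s0)) _ CE _) _).
  - split; [apply config_cause|split; [apply config_cause|]].
    unfold rel_id. split; [intros a b [h ->]; auto|split; [intros a h; eauto|split; [intros b h; eauto|]]].
    split; intros; destruct H, H0; congruence.
  - intros _ [].
  - intros a b. tauto.
Qed.

Lemma iso_mono {t : sev S -> sev S -> Prop} : iso S t ->
  forall a b a' b', t a b -> t a' b' -> le E a' a -> le E b' b.
Proof.
  intros Ht a b a' b' Hab Hab' Hle.
  destruct fam as [Hbij [_ [Hinv [_ [Hres _]]]]].
  pose proof (Hinv _ Ht) as Hi. destruct (Hbij _ Hi) as [X [Y [CX [CY SB]]]].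
  assert (Xb : X b) by (apply (proj1 SB b a); exact Hab).
  pose proof (Hres _ X Y (cause E b) Hi (conj CX (conj CY SB)) (config_cause b)) as HR.
  assert (forall p, cause E b p -> X p) as Hsub.
  { intros p hp. destruct CX as [_ [D _]]. eapply D; eauto. }
  specialize (HR Hsub). destruct (Hbij _ HR) as [X2 [Y2 [_ [[_ [D2 _]] SB2]]]].
  assert (Y2 a) by (apply (proj1 SB2 b a); split; [exact Hab|apply leS_refl]).
  assert (Y2 a') by (eapply D2; eauto).
  destruct (proj1 (proj2 (proj2 SB2)) a' H0) as [p [hp1 hp2]].
  destruct fam as [_ [_ [_ [_ [_ _]]]]].
  destruct (Hbij _ Ht) as [X3 [Y3 [_ [_ SB3]]]].
  assert (p = b') by (eapply (proj1 (proj2 (proj2 (proj2 SB3)))); eauto).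
  subst p. exact hp2.
Qed.

Lemma iso_pol (t : sev S -> sev S -> Prop) a b : iso S t -> t a b -> pl E a = pl E b.
Proof. destruct HS as [_ [_ h]]. apply h. Qed.

Lemma pl_sigma a : pl G (sigma a) = pl E a.
Proof. destruct Hmap as [_ [_ [h _]]]. apply h. Qed.

Lemma pl_lbl (d d' : sev (game A B)) : game_lbl d = game_lbl d' -> pl G d = pl G d'.
Proof. destruct d, d'; simpl; intro h; try discriminate; injection h as h; rewrite h; reflexivity. Qed.

Section Pair.
Variables (s s' : sev S) (n : nat) (c c' : nat -> sev S) (th : sev S -> sev S -> Prop).
Hypothesis Hc : @chain S s n c.
Hypothesis Hc' : @chain S s' n c'.
Hypothesis Hth : @order_iso E th (cause E s) (cause E s').

Lemma th_chain : forall i, i <= n -> th (c i) (c' i).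
Proof.
  destruct Hth as [[B1 [B2 [B3 [B4 B5]]]] Ho].
  induction i as [i IH] using lt_wf_ind. intros Hi.
  destruct (B2 (c i)) as [b Hb]. { unfold cause. eapply chain_top; eauto. }
  destruct (B1 _ _ Hb) as [_ Hb'].
  pose proof Hc' as [_ [_ Hcc']]. apply Hcc' in Hb'. destruct Hb' as [m [Hm <-]].
  destruct (B3 (c' i)) as [a Ha]. { unfold cause. eapply chain_top; eauto. }
  destruct (B1 _ _ Ha) as [Ha' _].
  pose proof Hc as [_ [_ Hcc]]. apply Hcc in Ha'. destruct Ha' as [j [Hj <-]].
  assert (i <= m). { destruct (le_lt_dec i m); auto. exfalso.
    pose proof (IH m l ltac:(lia)) as X1. pose proof (B5 _ _ _ Hb X1) as X2.
    apply (chain_inj Hc) in X2; lia. }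
  assert (i <= j). { destruct (le_lt_dec i j); auto. exfalso.
    pose proof (IH j l ltac:(lia)) as X1. pose proof (B4 _ _ _ Ha X1) as X2.
    apply (chain_inj Hc') in X2; lia. }
  assert (m <= i). { apply (chain_le_iff Hc'); auto. apply (Ho _ _ _ _ Hb Ha).
    apply (chain_le_iff Hc); auto. }
  assert (m = i) as -> by lia. auto.
Qed.

Definition thk (k : nat) : sev S -> sev S -> Prop := fun a b => th a b /\ le E a (c k).

Lemma thk_char k : k <= n -> forall a b, thk k a b <-> exists j, j <= k /\ a = c j /\ b = c' j.
Proof.
  intros Hk a b. destruct Hth as [[B1 [B2 [B3 [B4 B5]]]] Ho]. split.
  - intros [h1 h2]. destruct (B1 _ _ h1) as [Ha _]. pose proof Hc as [_ [_ Hcc]].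
    apply Hcc in Ha. destruct Ha as [j [Hj <-]]. exists j.
    assert (j <= k) by (apply (chain_le_iff Hc); auto). split; auto. split; auto.
    eapply B4; eauto. apply th_chain; auto.
  - intros [j [Hj [-> ->]]]. split. apply th_chain; lia. apply (chain_mono Hc); auto.
Qed.

Lemma img_char k : k <= n -> forall d d', img sigma (thk k) d d' <->
  exists j, j <= k /\ d = sigma (c j) /\ d' = sigma (c' j).
Proof.
  intros Hk d d'. unfold img. split.
  - intros [a [b [h [<- <-]]]]. apply thk_char in h; auto. destruct h as [j [Hj [-> ->]]]. eauto.
  - intros [j [Hj [-> ->]]]. exists (c j), (c' j). split; auto. apply thk_char; eauto.
Qed.

Definition Eqs : Prop :=
  (forall i, i <= n -> game_lbl (sigma (c i)) = game_lbl (sigma (c' i))) /\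
  (forall m i, m <= n -> i <= n -> (imm G (sigma (c m)) (sigma (c i)) <-> imm G (sigma (c' m)) (sigma (c' i)))).

Lemma Eqs_le : Eqs -> forall i j, i <= n -> j <= n ->
  (le G (sigma (c j)) (sigma (c i)) <-> le G (sigma (c' j)) (sigma (c' i))).
Proof.
  intros [_ HE] i j Hi Hj. rewrite (Char Hc), (Char Hc'); auto.
  split; apply rt_mono; intros a b [h1 [h2 h3]]; split; auto; split; auto; apply HE; auto.
Qed.

Section SideIso.
Variables (X : esp) (HX : is_arena X) (inj : bang_ev X -> sev (game A B)).
Hypothesis P1 : forall a b, le G (inj a) (inj b) <-> bang_le a b.
Hypothesis P2 : forall d b, le G d (inj b) -> exists a, d = inj a.
Hypothesis P3 : forall a d, game_lbl (inj a) = game_lbl d -> exists b, d = inj b.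
Hypothesis P4 : forall a b, game_lbl (inj a) = game_lbl (inj b) -> lbl a = lbl b.
Hypothesis P5 : forall a b, inj a = inj b -> a = b.

Lemma side_iso : Eqs -> forall k, k <= n -> iso (bang X) (fun a b => img sigma (thk k) (inj a) (inj b)).
Proof.
  intros HE k Hk. pose proof HE as [HL _].
  exists (fun al => exists j, j <= k /\ sigma (c j) = inj al),
         (fun al => exists j, j <= k /\ sigma (c' j) = inj al).
  split; [split; [|split]|split].
  - eapply side_config; eauto.
  - eapply side_config; eauto.
  - split; [|split; [|split; [|split]]].
    + intros a b h. apply img_char in h; auto. destruct h as [j [Hj [h1 h2]]]. split; eauto.
    + intros a [j [Hj h]]. pose proof (HL j ltac:(lia)) as hl. rewrite h in hl.
      destruct (P3 a _ hl) as [b hb]. exists b. apply img_char; auto. eauto.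
    + intros b [j [Hj h]]. pose proof (HL j ltac:(lia)) as hl. rewrite h in hl.
      destruct (P3 b _ (eq_sym hl)) as [a ha]. exists a. apply img_char; auto. eauto.
    + intros a b b' h h'. apply img_char in h; auto. apply img_char in h'; auto.
      destruct h as [j [Hj [h1 h2]]]. destruct h' as [j' [Hj' [h1' h2']]].
      rewrite h1 in h1'. apply (F2 Hc) in h1'; try lia. subst j'. apply P5. congruence.
    + intros a a' b h h'. apply img_char in h; auto. apply img_char in h'; auto.
      destruct h as [j [Hj [h1 h2]]]. destruct h' as [j' [Hj' [h1' h2']]].
      rewrite h2 in h2'. apply (F2 Hc') in h2'; try lia. subst j'. apply P5. congruence.
  - intros a b h. apply img_char in h; auto. destruct h as [j [Hj [h1 h2]]].
    apply P4. rewrite h1, h2. apply HL. lia.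
  - intros a a' b b' h h'. apply img_char in h; auto. apply img_char in h'; auto.
    destruct h as [j [Hj [h1 h2]]]. destruct h' as [j' [Hj' [h1' h2']]].
    rewrite <- !P1, h1, h2, h1', h2'. apply Eqs_le; auto; lia.
Qed.
End SideIso.

Lemma game_iso_k : Eqs -> forall k, k <= n -> iso (game A B) (img sigma (thk k)).
Proof.
  intros HE k Hk. split; [|split].
  - intros a b h. apply img_char in h; auto. destruct h as [j [Hj [-> ->]]].
    pose proof (proj1 HE j ltac:(lia)) as hl.
    destruct (sigma (c j)), (sigma (c' j)); simpl in hl; try discriminate; exact I.
  - apply (@side_iso A HA (fun a => inl a)); auto.
    + intros; reflexivity.
    + intros a [d|d] h; simpl in h; [eauto|discriminate].
    + intros a b h; simpl in h; congruence.
    + intros a b h; congruence.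
  - apply (@side_iso B HB (fun a => inr a)); auto.
    + intros; reflexivity.
    + intros a [d|d] h; simpl in h; [discriminate|eauto].
    + intros a b h; simpl in h; congruence.
    + intros a b h; congruence.
Qed.

Lemma LeEq_imm : (forall i j, i <= n -> j <= n ->
  (le G (sigma (c j)) (sigma (c i)) <-> le G (sigma (c' j)) (sigma (c' i)))) ->
  forall m i, m <= n -> i <= n -> (imm G (sigma (c m)) (sigma (c i)) <-> imm G (sigma (c' m)) (sigma (c' i))).
Proof.
  intros HL m i Hm Hi. rewrite (imm_char Hc), (imm_char Hc'); auto.
  split; intros [h1 [h2 h3]]; (split; [apply HL; auto|split; auto]); intros [q [Hq [q1 [q2 [q3 q4]]]]];
   apply h3; exists q; repeat split; auto; apply HL; auto.
Qed.

Lemma iso3_Eqs : iso (game A B) (img sigma th) -> Eqs.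
Proof.
  intros [Hside [[xA [yA [_ [HlA HoA]]]] [xB [yB [_ [HlB HoB]]]]]].
  assert (Hp : forall i, i <= n -> img sigma th (sigma (c i)) (sigma (c' i))).
  { intros i Hi. exists (c i), (c' i). split; auto. apply th_chain; auto. }
  assert (HL : forall i j, i <= n -> j <= n ->
     (le G (sigma (c j)) (sigma (c i)) <-> le G (sigma (c' j)) (sigma (c' i)))).
  { intros i j Hi Hj. pose proof (Hp i Hi) as pi. pose proof (Hp j Hj) as pj.
    pose proof (Hside _ _ pi) as si. pose proof (Hside _ _ pj) as sj.
    destruct (sigma (c i)) eqn:E1, (sigma (c' i)) eqn:E2; try destruct si;
    destruct (sigma (c j)) eqn:E3, (sigma (c' j)) eqn:E4; try destruct sj; simpl; try tauto.
    - apply (HoA _ _ _ _ pj pi).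
    - apply (HoB _ _ _ _ pj pi). }
  split.
  - intros i Hi. pose proof (Hp i Hi) as pi. pose proof (Hside _ _ pi) as si.
    destruct (sigma (c i)) eqn:E1, (sigma (c' i)) eqn:E2; try destruct si; simpl; f_equal.
    + apply (HlA _ _ pi).
    + apply (HlB _ _ pi).
  - apply LeEq_imm; auto.
Qed.

Lemma Eqs_points : Eqs -> forall i j, i <= n -> j <= n ->
  (@points A B S sigma c i j <-> @points A B S sigma c' i j).
Proof.
  intros HE i j Hi Hj. pose proof (Eqs_le HE) as HL. destruct HE as [Hlab Himm].
  unfold points. rewrite (Himm j i Hj Hi).
  assert (forall al, sigma (c i) = inl al -> minimal (esp_of (dual (bang A))) al ->
            exists al', sigma (c' i) = inl al' /\ minimal (esp_of (dual (bang A))) al') as K1.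
  { intros al E1 Hmin. pose proof (Hlab i Hi) as hl. rewrite E1 in hl.
    destruct (sigma (c' i)) as [al'|al'] eqn:E2; simpl in hl; try discriminate.
    exists al'. split; auto. rewrite (min_char Hc' i al' Hi E2). rewrite (min_char Hc i al Hi E1) in Hmin.
    intros q Hq Hle. apply Hmin; auto. apply HL; auto. }
  assert (forall al, sigma (c' i) = inl al -> minimal (esp_of (dual (bang A))) al ->
            exists al', sigma (c i) = inl al' /\ minimal (esp_of (dual (bang A))) al') as K2.
  { intros al E1 Hmin. pose proof (Hlab i Hi) as hl. rewrite E1 in hl.
    destruct (sigma (c i)) as [al'|al'] eqn:E2; simpl in hl; try discriminate.
    exists al'. split; auto. rewrite (min_char Hc i al' Hi E2). rewrite (min_char Hc' i al Hi E1) in Hmin.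
    intros q Hq Hle. apply Hmin; auto. apply HL; auto. }
  split; (intros [h|[h0 [al [h1 h2]]]]; [left; auto|right; split; auto]); eauto.
Qed.

Definition Pk (k : nat) : sev S -> sev S -> Prop := fun a b => exists j, j < k /\ a = c j /\ b = c' j.

Lemma c_in j : j <= n -> cause E s (c j).
Proof. intro; unfold cause; eapply chain_top; eauto. Qed.
Lemma c'_in j : j <= n -> cause E s' (c' j).
Proof. intro; unfold cause; eapply chain_top; eauto. Qed.

Lemma step_neg : Eqs -> forall k, k <= n -> iso S (Pk k) -> pl E (c k) = Neg -> iso S (Pk (Datatypes.S k)).
Proof.
  intros HE k Hk HP Hpol. destruct Hstr as [_ [_ [Hsr _]]].
  destruct (Hsr (Pk k) (img sigma (thk k)) HP (game_iso_k HE k Hk)) as [[th' [Ith' [Hinc Heq]]] _].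
  { split.
    - intros d d' [a [b [[j [Hj [-> ->]]] [<- <-]]]]. apply img_char; auto. exists j; repeat split; auto; lia.
    - intros d d' h hn. apply img_char in h; auto. destruct h as [j [Hj [-> ->]]].
      destruct (Nat.eq_dec j k) as [->|hjk].
      + rewrite pl_sigma; auto.
      + exfalso; apply hn. exists (c j), (c' j). split; auto. exists j; repeat split; auto; lia. }
  destruct fam as [Hbij _]. destruct (Hbij _ Ith') as [x [y [Cx [Cy SB]]]].
  assert (Fwd : forall a b, th' a b -> exists j, j <= k /\ a = c j /\ b = c' j).
  { intros a b h. assert (img sigma th' (sigma a) (sigma b)) as h2 by (exists a, b; auto).
    apply Heq, img_char in h2; auto. destruct h2 as [j [Hj [e1 e2]]]. exists j. split; auto.
    destruct (proj1 SB a b h) as [xa yb]. split.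
    - apply (loc_inj (config_union Cx (config_cause s))); auto. right; apply c_in; lia.
    - apply (loc_inj (config_union Cy (config_cause s'))); auto. right; apply c'_in; lia. }
  apply (iso_ext _ _ Ith'). intros a b. split.
  - intros h. destruct (Fwd a b h) as [j [Hj [-> ->]]]. exists j. split; auto; lia.
  - intros [j [Hj [-> ->]]]. destruct (Nat.eq_dec j k) as [->|hjk].
    + assert (img sigma (thk k) (sigma (c k)) (sigma (c' k))) as h by (apply img_char; eauto).
      apply Heq in h. destruct h as [a [b [h [e1 e2]]]].
      destruct (Fwd a b h) as [j2 [Hj2 [-> ->]]]. apply (F2 Hc) in e1; try lia. subst j2. exact h.
    + apply Hinc. exists j. split; auto; lia.
Qed.

Lemma step_pos : Eqs -> forall k, k <= n -> iso S (Pk k) -> pl E (c k) = Pos -> iso S (Pk (Datatypes.S k)).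
Proof.
  intros HE k Hk HP Hpol. destruct fam as [Hbij [_ [Hinv [_ [_ Hext]]]]].
  destruct k as [|k'].
  - exfalso. assert (minimal E (c 0)) as Hm.
    { intros b hb. apply (chain_cause Hc 0 b ltac:(lia)) in hb. destruct hb as [j [Hj <-]].
      f_equal; lia. }
    apply Hneg in Hm. congruence.
  - set (k := Datatypes.S k') in *.
    destruct (Hbij _ HP) as [x [y [Cx [Cy SB]]]].
    destruct (Hext (Pk k) x y (cause E (c k)) HP (conj Cx (conj Cy SB)) (config_cause (c k))) as [th' [Ith' [Hinc Hdom]]].
    { intros a xa. destruct (proj1 (proj2 SB) a xa) as [b [j [Hj [-> ->]]]].
      unfold cause. apply (chain_mono Hc); lia. }
    destruct (proj2 (Hdom (c k)) (leS_refl _)) as [u Hu].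
    destruct (Hbij _ Ith') as [x2 [y2 [Cx2 [Cy2 SB2]]]].
    destruct SB2 as [S1 [S2 [S3 [S4 S5]]]].
    assert (Hinc' : forall j, j < k -> th' (c j) (c' j)) by (intros j hj; apply Hinc; exists j; auto).
    assert (Hle : le E (c' k') u).
    { apply (iso_mono Ith' (c k) u (c k') (c' k') Hu (Hinc' k' ltac:(lia))). apply (chain_mono Hc); lia. }
    assert (Himm_u : imm E (c' k') u).
    { split; [split; auto|].
      - intro e. rewrite <- e in Hu. pose proof (S5 _ _ _ Hu (Hinc' k' ltac:(lia))) as e2.
        apply (chain_inj Hc) in e2; lia.
      - intros [w [[w1 w2] [w3 w4]]].
        assert (y2 w). { destruct Cy2 as [_ [D _]]. eapply D; [|exact w3]. apply (S1 _ _ Hu). }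
        destruct (S3 w H) as [a Ha].
        assert (cause E (c k) a) as Ca by (apply Hdom; exists w; auto).
        apply (chain_cause Hc k a ltac:(lia)) in Ca. destruct Ca as [j [Hj <-]].
        assert (le E (c k') (c j)) as Hkj.
        { apply (iso_mono (Hinv _ Ith') w (c j) (c' k') (c k')); auto. exact (Hinc' k' ltac:(lia)). }
        apply (chain_le_iff Hc) in Hkj; try lia.
        destruct (Nat.eq_dec j k') as [->|hj].
        + apply w2. eapply S4; [exact (Hinc' k' ltac:(lia))|exact Ha].
        + assert (j = k) as -> by (unfold k in *; lia). apply w4. eapply S4; eauto. }
    assert (Himm_c : imm E (c' k') (c' k)) by (apply (proj1 (proj2 Hc')); unfold k; lia).
    assert (Hu_pol : pl E u = Pos) by (rewrite <- (iso_pol _ _ _ Ith' Hu); auto).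
    assert (Hc_pol : pl E (c' k) = Pos).
    { rewrite <- pl_sigma, <- (pl_lbl _ _ (proj1 HE k Hk)), pl_sigma; auto. }
    assert (u = c' k) as Huc.
    { destruct (classic (u = c' k)) as [h|h]; auto. exfalso.
      apply (proj2 Hseq (c' k') u (c' k) Himm_u Himm_c Hu_pol Hc_pol h).
      exact (config_union (config_cause u) (config_cause (c' k))). }
    subst u.
    apply (iso_ext _ _ Ith'). intros a b. split.
    + intro h. assert (cause E (c k) a) as Ca by (apply Hdom; exists b; auto).
      apply (chain_cause Hc k a ltac:(lia)) in Ca. destruct Ca as [j [Hj <-]].
      exists j. split; [lia|split; auto].
      destruct (Nat.eq_dec j k) as [->|hj]; [eapply S4; eauto|].
      eapply S4; [exact h|apply Hinc'; lia].
    + intros [j [Hj [-> ->]]]. destruct (Nat.eq_dec j k) as [->|hj]; auto. apply Hinc'; lia.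
Qed.

Lemma all_iso : Eqs -> iso S th.
Proof.
  intros HE. assert (forall k, k <= Datatypes.S n -> iso S (Pk k)) as H.
  { induction k as [|k IH]; intros Hk.
    - apply (iso_ext _ _ (iso_empty s)). intros a b; split; [intros []|intros [j [Hj _]]; lia].
    - destruct (pl E (c k)) eqn:Ep.
      + apply step_pos; auto; [lia|apply IH; lia].
      + apply step_neg; auto; [lia|apply IH; lia]. }
  apply (iso_ext _ _ (H (Datatypes.S n) (le_n _))). intros a b. split.
  - intros [j [Hj [-> ->]]]. apply th_chain; lia.
  - intros h. destruct Hth as [[B1 [_ [_ [B4 _]]]] _]. destruct (B1 _ _ h) as [Ha _].
    pose proof Hc as [_ [_ Hcc]]. apply Hcc in Ha. destruct Ha as [j [Hj <-]].
    exists j. split; [lia|split; auto]. eapply B4; [exact h|apply th_chain; auto].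
Qed.

End Pair.
Lemma noimm_min {s0 n cc} : @chain S s0 n cc -> forall i al al', i <= n -> sigma (cc i) = inl al ->
  lbl al = lbl al' -> minimal (esp_of (dual (bang A))) al' -> imm G (sigma (cc 0)) (sigma (cc i)) -> False.
Proof.
  intros Hcc i al al' Hi E1 Hl Hmin Himm.
  pose proof Himm as [[Hle Hne] _]. rewrite E1 in Hle.
  destruct (sigma (cc 0)) as [a0|a0] eqn:E0; simpl in Hle; [|destruct Hle].
  destruct Hle as [hl ha]. rewrite Hl in hl.
  set (b := existT (fun a => forall a' : ev A, le A a' a -> nat) (lbl a0)
              (fun a' h => projT2 al' a' (es_trans _ (proj1 HA) _ _ _ h hl))).
  assert (Hb : b = al').
  { apply Hmin. simpl. split; [exact hl|]. intros a' h1 h2. simpl. f_equal. apply proof_irrelevance. }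
  assert (Hlb : lbl a0 = lbl al) by (rewrite Hl, <- Hb; reflexivity).
  assert (le G (sigma (cc i)) (sigma (cc 0))) as Hback.
  { rewrite E1, E0. simpl. split.
    - rewrite Hlb. apply es_refl, HA.
    - intros a' h1 h2. symmetry. apply ha. }
  destruct (F1 Hcc 0 _ ltac:(lia) Hback) as [q [Hq Hqe]]. assert (q = 0) as -> by lia.
  apply (F2 Hcc) in Hqe; try lia. subst i. apply Hne. congruence.
Qed.

Lemma points_Eqs {s0 s1 n cc cc'} : @chain S s0 n cc -> @chain S s1 n cc' ->
  (forall i, i <= n -> game_lbl (sigma (cc i)) = game_lbl (sigma (cc' i))) ->
  (forall i j, i <= n -> j <= n -> (@points A B S sigma cc i j <-> @points A B S sigma cc' i j)) ->
  Eqs n cc cc'.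
Proof.
  intros Hcc Hcc' Hlab Hpt. split; auto. intros m i Hm Hi.
  destruct (Nat.eq_dec m 0) as [->|Hm0].
  - assert (K : forall c1 c2 t0 t1, @chain S t0 n c1 -> @chain S t1 n c2 ->
       game_lbl (sigma (c1 i)) = game_lbl (sigma (c2 i)) ->
       (@points A B S sigma c1 i 0 <-> @points A B S sigma c2 i 0) ->
       imm G (sigma (c1 0)) (sigma (c1 i)) -> imm G (sigma (c2 0)) (sigma (c2 i))).
    { intros c1 c2 t0 t1 H1 H2 hl hp h. assert (@points A B S sigma c1 i 0) as p1 by (left; auto).
      apply hp in p1. destruct p1 as [p1|[_ [al' [E2 Hmin]]]]; auto. exfalso.
      rewrite E2 in hl. destruct (sigma (c1 i)) as [al|al] eqn:E1; simpl in hl; try discriminate.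
      injection hl as hl. apply (noimm_min H1 i al al' Hi E1 hl Hmin); rewrite E1; exact h. }
    split.
    + apply K with (t0 := s0) (t1 := s1); auto.
    + apply K with (t0 := s1) (t1 := s0); auto. symmetry; auto. intros; symmetry; auto.
  - assert (forall c1, @points A B S sigma c1 i m <-> imm G (sigma (c1 m)) (sigma (c1 i))) as K.
    { intros c1. unfold points. split; [intros [h|[h _]]; [auto|contradiction]|left; auto]. }
    rewrite <- !K. apply Hpt; auto.
Qed.

Lemma map_eq_in {T U : Type} (f g : T -> U) (l : list T) x : map f l = map g l -> In x l -> f x = g x.
Proof.
  induction l as [|a l IH]; simpl; intros h hin; [destruct hin|]. injection h as h1 h2.
  destruct hin as [<-|hin]; auto.
Qed.

Lemma final (s s' : sev S) (n : nat) : @cause_card S s n -> @cause_card S s' n ->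
  forall theta : sev S -> sev S -> Prop,
    @order_iso E theta (cause E s) (cause E s') ->
    ((exists p : pseq A B, @pointing_seq A B S sigma s p /\ @pointing_seq A B S sigma s' p)
       <-> iso S theta) /\
    (iso S theta <-> iso (game A B) (img sigma theta)).
Proof.
  intros Hcs Hcs' theta Hth.
  destruct (card_pos Hcs) as [m ->].
  destruct (chain_exists m s Hcs) as [c Hc]. destruct (chain_exists m s' Hcs') as [c' Hc'].
  assert (H23 : iso S theta -> iso (game A B) (img sigma theta)).
  { intro h. destruct Hmap as [_ [_ [_ h4]]]. apply h4; auto. }
  assert (H32 : iso (game A B) (img sigma theta) -> iso S theta).
  { intro h. apply (all_iso s s' m c c' theta Hc Hc' Hth). apply (iso3_Eqs s s' m c c' theta Hc Hc' Hth h). }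
  split; [|tauto]. split.
  - intros [p [[n1 [c1 [Hc1 [Hf1 Hs1]]]] [n2 [c2 [Hc2 [Hf2 Hs2]]]]]].
    assert (n1 = n2) as <-.
    { assert (length (fst p) = length (fst p)) as L by reflexivity.
      rewrite Hf1 in L at 1. rewrite Hf2 in L. rewrite !length_map, !length_seq in L. lia. }
    apply (all_iso s s' n1 c1 c2 theta Hc1 Hc2 Hth). apply (points_Eqs Hc1 Hc2).
    + intros i Hi. rewrite Hf1 in Hf2. apply (map_eq_in _ _ _ i Hf2). apply in_seq. lia.
    + intros i j Hi Hj. pose proof (Hs1 i j) as h1. pose proof (Hs2 i j) as h2. rewrite h1 in h2.
      split; intro h; [apply h2|apply h2]; auto.
  - intro h. pose proof (iso3_Eqs s s' m c c' theta Hc Hc' Hth (H23 h)) as HE.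
    exists (map (fun i => game_lbl (sigma (c i))) (seq 0 (Datatypes.S m)),
            fun i j => i <= m /\ j <= m /\ @points A B S sigma c i j).
    split.
    + exists m, c. split; auto. split; auto. simpl. tauto.
    + exists m, c'. split; auto. split.
      * cbn [fst]. symmetry. apply map_ext_in. intros i hi. apply in_seq in hi. symmetry. apply (proj1 HE). lia.
      * intros i j. simpl. split; intros [hi [hj hp]]; split; auto; split; auto;
          apply (Eqs_points s s' m c c' Hc Hc' HE); auto.
Qed.

End Main.

Theorem mainTheorem14 :
  forall (A B : esp) (S : essp) (sigma : sev S -> sev (game A B)),
    is_arena A -> is_arena B -> is_essp S ->
    @strategy S (game A B) sigma -> negative S -> deterministic S ->
    sequential_innocent S ->
    forall (s s' : sev S) (n : nat),
      @cause_card S s n -> @cause_card S s' n ->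
      forall theta : sev S -> sev S -> Prop,
        @order_iso (esp_of S) theta (cause (esp_of S) s) (cause (esp_of S) s') ->
        ((exists p : pseq A B,
             @pointing_seq A B S sigma s p /\ @pointing_seq A B S sigma s' p)
           <-> iso S theta) /\
        (iso S theta <-> iso (game A B) (img sigma theta)).
Proof.
  intros A B S sigma HA HB HS Hstr Hneg Hdet Hseq s s' n Hcs Hcs' theta Hth.
  eapply final; eauto.
Qed.
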